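(* Let $n\ge1$, let $a_1,\dots,a_n\in\mathbb{C}$ be distinct, let $m_1,\dots,m_n\ge1$ be integers, let $c_0,b_k^{(j)}\in\mathbb{C}$, and let $$r(\lambda)=\lambda-c_0-\sum_{j=1}^n\sum_{k=1}^{m_j}\frac{b_k^{(j)}}{(\lambda-a_j)^k}.$$ If $\lambda_0$ is a zero of $r$, then $$|\lambda_0|\le\max_{1\le j\le n}\Big\{|a_j|+\cos\Big(\frac{\pi}{m_j+1}\Big),\ |c_0|\Big\}+\frac12\left(\sqrt{\sum_{j=1}^n m_j}+\sqrt{\sum_{j=1}^n\sum_{k=1}^{m_j}|b_k^{(j)}|^2}\right).$$
   Context: A zero of $r$ is a $\lambda_0\in\mathbb{C}\setminus\{a_1,\dots,a_n\}$ with $r(\lambda_0)=0$. *)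

(* Defs.v *)
From HB Require Import structures.
From mathcomp Require Import all_boot all_order all_algebra.
From mathcomp Require Import all_classical all_reals all_analysis.
From mathcomp Require Import complex.
Set Implicit Arguments. Unset Strict Implicit. Unset Printing Implicit Defensive.
Import Order.TTheory GRing.Theory Num.Theory.
Local Open Scope ring_scope.

Definition rfun (R : realType) (n : nat) (a : 'I_n -> R[i]) (m : 'I_n -> nat)
  (c0 : R[i]) (b : 'I_n -> nat -> R[i]) (lam : R[i]) : R[i] :=
  lam - c0 - \sum_(j < n) \sum_(1 <= k < (m j).+1) b j k / (lam - a j) ^+ k.

Definition is_zero_of_r (R : realType) (n : nat) (a : 'I_n -> R[i]) (m : 'I_n -> nat)
  (c0 : R[i]) (b : 'I_n -> nat -> R[i]) (lam : R[i]) : Prop :=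
  (forall j, lam != a j) /\ rfun a m c0 b lam = 0.

Notation normc := ComplexField.Normc.normc.

(* Main.v *)
Require Import Defs.
From HB Require Import structures.
From mathcomp Require Import all_boot all_order all_algebra.
From mathcomp Require Import all_classical all_reals all_analysis.
From mathcomp Require Import complex.
From mathcomp Require Import ring lra.
Import Order.TTheory GRing.Theory Num.Theory.
Local Open Scope ring_scope.

Section Jordan.
Variable R : realType.

Lemma amgm_w (s t u v : R) : 0 < s -> 0 < t ->
  u * v <= (t / s * u ^+ 2 + s / t * v ^+ 2) / 2.
Proof.
move=> s0 t0.
have st : 0 < s * t by rewrite mulr_gt0.
rewrite -(ler_pM2r st).
have -> : (t / s * u ^+ 2 + s / t * v ^+ 2) / 2 * (s * t)
   = (t ^+ 2 * u ^+ 2 + s ^+ 2 * v ^+ 2) / 2.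
  by field; rewrite ?gt_eqF.
have : 0 <= (t * u - s * v) ^+ 2 by apply: sqr_ge0.
move=> h; nra.
Qed.

Lemma sin_sum (p : nat) (th : R) : (1 <= p)%N ->
  sin (p.-1%:R * th) + sin (p.+1%:R * th) = 2 * cos th * sin (p%:R * th).
Proof.
case: p => // p _.
rewrite -[p.+1.-1]/p.
have -> : p.+2%:R * th = p.+1%:R * th + th by rewrite -[p.+2]addn1 natrD; ring.
have -> : p%:R * th = p.+1%:R * th - th by rewrite -[p.+1]addn1 natrD; ring.
idtac.
rewrite (sinB (p.+1%:R * th) th) sinD; ring.
Qed.


Lemma jordan (m : nat) (x : nat -> R) : (1 <= m)%N -> (forall k, 0 <= x k) ->
  \sum_(2 <= k < m.+1) x k * x k.-1 <=
  cos (pi / m.+1%:R) * \sum_(1 <= k < m.+1) x k ^+ 2.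
Proof.
move=> m1 x0.
set th := pi / m.+1%:R.
set s := fun k : nat => sin (k%:R * th).
set h := fun k : nat => s k.-1 / (2 * s k) * x k ^+ 2.
have m1R : (0 : R) < m.+1%:R by rewrite ltr0n.
have s0 : s 0%N = 0 by rewrite /s mul0r sin0.
have sm1 : s m.+1 = 0.
  by rewrite /s /th mulrC -mulrA mulVf ?gt_eqF // mulr1 sinpi.
have spos : forall k, (1 <= k <= m)%N -> 0 < s k.
  move=> k /andP[k1 km]; apply: sin_gt0_pi; apply/andP; split.
    by rewrite /th mulr_gt0 ?divr_gt0 ?pi_gt0 // ltr0n.
  rewrite /th mulrA ltr_pdivrMr // mulrC ltr_pM2l ?pi_gt0 // ltr_nat.
  by rewrite ltnS.
have ss := fun k (hk : (1 <= k)%N) => @sin_sum k th hk.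
have key : forall p, (1 <= p <= m)%N ->
  \sum_(2 <= k < p.+1) x k * x k.-1 <= cos th * \sum_(1 <= k < p) x k ^+ 2 + h p.
  elim=> [//|p IH] /andP[_ pm].
  case: p IH pm => [_ _|p IH pm].
    by rewrite !big_geq // /h s0 !mul0r mulr0 addr0.
  rewrite big_nat_recr //= [X in _ <= cos th * X + _]big_nat_recr //=.
  have Hp := IH (ltnW pm).
  have sp : 0 < s p.+1 by apply: spos; apply/andP; split => //; exact: ltnW.
  have sp1 : 0 < s p.+2 by apply: spos; rewrite pm.
  have am := @amgm_w (s p.+1) (s p.+2) (x p.+1) (x p.+2) sp sp1; rewrite mulrC in am.
  have e := ss p.+1 isT. rewrite -/(s p.+1) in e.
  rewrite -[p.+1.-1]/p in e.
  have E1 : s p.+2 / s p.+1 = 2 * cos th - s p / s p.+1.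
    have E0 : s p.+2 = 2 * cos th * s p.+1 - s p by rewrite /s -e; ring.
    rewrite E0; field; exact: lt0r_neq0.
  rewrite E1 in am.
  have -> : h p.+2 = s p.+1 / s p.+2 * x p.+2 ^+ 2 / 2.
    by rewrite /h /=; field; rewrite ?gt_eqF.
  have Hh : h p.+1 = s p / s p.+1 * x p.+1 ^+ 2 / 2.
    by rewrite /h /=; field; rewrite ?gt_eqF.
  rewrite Hh in Hp.
  lra.
have K := key m; rewrite m1 leqnn in K; have {}K := K isT.
rewrite [X in _ <= _ * X]big_nat_recr //= mulrDr.
suff E : h m = cos th * x m ^+ 2 by rewrite -E.
have e := ss m m1; rewrite -/(s m) -/(s m.-1) -/(s m.+1) sm1 addr0 in e.
have smp : 0 < s m by apply: spos; rewrite m1 leqnn.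
rewrite /h e; field; exact: lt0r_neq0.
Qed.

Lemma cs_abs (P U V : R) : 0 <= U -> 0 <= V ->
  (forall t, 0 < t -> 2 * P <= t * U + V / t) -> P <= Num.sqrt U * Num.sqrt V.
Proof.
move=> U0 V0 H.
have sUV : 0 <= Num.sqrt U * Num.sqrt V by rewrite mulr_ge0 ?sqrtr_ge0.
have [P0|Pp] := lerP P 0; first exact: le_trans P0 sUV.
have [Ue|Up] := eqVneq U 0.
  have t0 : 0 < (V + 1) / P by rewrite divr_gt0 // ltr_wpDl.
  have := H _ t0; rewrite Ue mulr0 add0r invf_div.
  have : V * (P / (V + 1)) < P.
    rewrite mulrA ltr_pdivrMr ?ltr_wpDl //.
    nra.
  move=> h1 h2; exfalso; lra.
have [Ve|Vp] := eqVneq V 0.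
  have t0 : 0 < P / (U + 1) by rewrite divr_gt0 // ltr_wpDl.
  have := H _ t0; rewrite Ve mul0r addr0.
  have : P / (U + 1) * U < P.
    rewrite mulrAC ltr_pdivrMr ?ltr_wpDl //.
    nra.
  move=> h1 h2; exfalso; lra.
have sU : 0 < Num.sqrt U by rewrite sqrtr_gt0 lt_neqAle eq_sym Up U0.
have sV : 0 < Num.sqrt V by rewrite sqrtr_gt0 lt_neqAle eq_sym Vp V0.
have := H (Num.sqrt V / Num.sqrt U) (divr_gt0 sV sU).
rewrite -{2}(sqr_sqrtr U0) -{2}(sqr_sqrtr V0).
have -> : Num.sqrt V / Num.sqrt U * Num.sqrt U ^+ 2 + Num.sqrt V ^+ 2 / (Num.sqrt V / Num.sqrt U)
   = 2 * (Num.sqrt U * Num.sqrt V).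
  by field; rewrite ?lt0r_neq0.
move=> h; lra.
Qed.

Lemma cs2 (n : nat) (m : 'I_n -> nat) (f g : 'I_n -> nat -> R) :
  (forall j k, 0 <= f j k) -> (forall j k, 0 <= g j k) ->
  \sum_(j < n) \sum_(1 <= k < (m j).+1) f j k * g j k <=
  Num.sqrt (\sum_(j < n) \sum_(1 <= k < (m j).+1) f j k ^+ 2) *
  Num.sqrt (\sum_(j < n) \sum_(1 <= k < (m j).+1) g j k ^+ 2).
Proof.
move=> f0 g0; apply: cs_abs.
- by apply: sumr_ge0 => j _; apply: sumr_ge0 => k _; apply: sqr_ge0.
- by apply: sumr_ge0 => j _; apply: sumr_ge0 => k _; apply: sqr_ge0.
move=> t t0.
rewrite mulr_sumr mulr_sumr mulr_suml -big_split /=.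
apply: ler_sum => j _.
rewrite mulr_sumr mulr_sumr mulr_suml -big_split /=.
apply: ler_sum => k _.
have h : 0 <= (t * f j k - g j k) ^+ 2 by apply: sqr_ge0.
rewrite -(ler_pM2r t0).
have -> : (t * f j k ^+ 2 + g j k ^+ 2 / t) * t = (t * f j k) ^+ 2 + g j k ^+ 2.
  by field; rewrite lt0r_neq0.
nra.
Qed.
End Jordan.

Section Cplx.
Variable R : realType.
Local Open Scope complex_scope.

Lemma nc_ge0 (x : R[i]) : 0 <= normc x.
Proof. by case: x => a b; exact: sqrtr_ge0. Qed.

Lemma nc_sum I (r : seq I) (P : pred I) (F : I -> R[i]) :
  normc (\sum_(i <- r | P i) F i) <= \sum_(i <- r | P i) normc (F i).
Proof. rewrite -lecR rmorph_sum; move: (ler_norm_sum r F P) => /= h; exact: h. Qed.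

Lemma ncD (x y : R[i]) : normc (x + y) <= normc x + normc y.
Proof. rewrite -lecR rmorphD; move: (ler_normD x y) => /= h; exact: h. Qed.

Lemma ncX (x : R[i]) k : normc (x ^+ k) = normc x ^+ k.
Proof.
elim: k => [|k IH]; first by rewrite !expr0 ComplexField.Normc.normc1.
by rewrite !exprS ComplexField.Normc.normcM IH.
Qed.

Lemma ncJ (x : R[i]) : normc (x^*)%C = normc x.
Proof. apply: complexI; exact: normcJ. Qed.

Lemma nc_real (r : R) : 0 <= r -> normc (r%:C) = r.
Proof. by move=> r0; rewrite /= expr0n /= addr0 sqrtr_sqr ger0_norm. Qed.

End Cplx.
Arguments nc_ge0 {R}.
Arguments nc_sum {R I}.
Arguments ncD {R}.
Arguments ncX {R}.
Arguments ncJ {R}.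
Arguments nc_real {R}.

Theorem theorem3p10 (R : realType) (n : nat) (a : 'I_n -> R[i]) (m : 'I_n -> nat)
  (c0 : R[i]) (b : 'I_n -> nat -> R[i]) (lam0 : R[i]) :
  (0 < n)%N ->
  injective a ->
  (forall j, (1 <= m j)%N) ->
  is_zero_of_r a m c0 b lam0 ->
  normc lam0 <=
    \big[Num.max/normc c0]_(j < n) (normc (a j) + cos (pi / (m j).+1%:R))
    + 2^-1 * (Num.sqrt (\sum_(j < n) (m j)%:R)
              + Num.sqrt (\sum_(j < n) \sum_(1 <= k < (m j).+1) normc (b j k) ^+ 2)).
Proof.
move=> n0 _ m1 [lna r0].
pose w j := (lam0 - a j)^-1.
pose rho j := normc (w j).
pose Yc j := \sum_(1 <= k < (m j).+1) ((w j)^*)%C ^+ k * w j ^+ k.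
pose Tc j := \sum_(2 <= k < (m j).+1) ((w j)^*)%C ^+ k * w j ^+ k.-1.
pose Y j := \sum_(1 <= k < (m j).+1) (rho j ^+ k) ^+ 2.
have dn0 : forall j, lam0 - a j != 0 by move=> j; rewrite subr_eq0.
have step1 : lam0 = c0 + \sum_(j < n) \sum_(1 <= k < (m j).+1) b j k * w j ^+ k.
  move: r0; rewrite /rfun => /eqP; rewrite subr_eq0 subr_eq => /eqP ->.
  rewrite addrC; congr (_ + _); apply: eq_bigr => j _; apply: eq_bigr => k _.
  by rewrite /w exprVn.
have step2 : forall j, lam0 * Yc j = a j * Yc j + ((w j)^*)%C + Tc j.
  move=> j.
  suff h : (lam0 - a j) * Yc j = ((w j)^*)%C + Tc j by rewrite -addrA -h; ring.
  rewrite /Yc mulr_sumr.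
  rewrite (eq_big_nat _ _ (F2 := fun k => ((w j)^*)%C ^+ k * w j ^+ k.-1)); last first.
    move=> k /andP[k1 _]; case: k k1 => // k _ /=.
    by rewrite [w j ^+ k.+1]exprS /w mulrCA (mulrA (lam0 - a j)) mulfV ?dn0 // mul1r.
  rewrite big_ltn; last by rewrite ltnS m1.
  by rewrite expr1 expr0 mulr1.
have step3 : forall j, Yc j = ((Y j)%:C)%C.
  move=> j; rewrite /Y rmorph_sum; apply: eq_bigr => k _.
  rewrite -exprMn mulrC -sqr_normc -exprM mulnC exprM.
  by rewrite rmorphXn /= rmorphXn.
have Y0 : forall j, 0 <= Y j.
  by move=> j; apply: sumr_ge0 => k _; apply: sqr_ge0.
set Yt := \sum_(j < n) Y j.
have Yt0 : 0 <= Yt by apply: sumr_ge0 => j _.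
have S0 : 0 < 1 + Yt by rewrite ltr_wpDr.
have step4 : lam0 * ((1 + Yt)%:C)%C = c0 + \sum_(j < n) \sum_(1 <= k < (m j).+1) b j k * w j ^+ k
    + \sum_(j < n) (a j * Yc j + ((w j)^*)%C + Tc j).
  rewrite rmorphD rmorph1 rmorph_sum mulrDr mulr1 mulr_sumr.
  rewrite (eq_bigr (fun j => a j * Yc j + ((w j)^*)%C + Tc j)); last first.
    by move=> j _; transitivity (lam0 * Yc j); [rewrite step3 | exact: step2].
  by rewrite {1}step1.
have step5 : normc lam0 * (1 + Yt) <= normc c0
    + \sum_(j < n) \sum_(1 <= k < (m j).+1) normc (b j k) * rho j ^+ k
    + \sum_(j < n) (normc (a j) * Y j + rho j
        + \sum_(2 <= k < (m j).+1) rho j ^+ k * rho j ^+ k.-1).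
  have -> : normc lam0 * (1 + Yt) = normc (lam0 * ((1 + Yt)%:C)%C).
    by rewrite ComplexField.Normc.normcM nc_real // ltW.
  rewrite step4.
  apply: le_trans (ncD _ _) _; apply: lerD.
    apply: le_trans (ncD _ _) _; apply: lerD => //.
    apply: le_trans (nc_sum _ _ _) _; apply: ler_sum => j _.
    apply: le_trans (nc_sum _ _ _) _; apply: ler_sum => k _.
    by rewrite ComplexField.Normc.normcM ncX.
  apply: le_trans (nc_sum _ _ _) _; apply: ler_sum => j _.
  apply: le_trans (ncD _ _) _; apply: lerD.
    apply: le_trans (ncD _ _) _; apply: lerD.
      by rewrite ComplexField.Normc.normcM step3 nc_real.
    by rewrite ncJ.
  apply: le_trans (nc_sum _ _ _) _; apply: ler_sum => k _.
  by rewrite ComplexField.Normc.normcM !ncX ncJ.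
set M := \big[Num.max/normc c0]_(j < n) _.
have hM0 : normc c0 <= M by apply: bigmax_ge_id.
have hMj : forall j, normc (a j) + cos (pi / (m j).+1%:R) <= M.
  by move=> j; rewrite /M; exact: le_bigmax.
have rho0 : forall j, 0 <= rho j by move=> j; apply: nc_ge0.
have step6 : \sum_(j < n) (normc (a j) * Y j + rho j
        + \sum_(2 <= k < (m j).+1) rho j ^+ k * rho j ^+ k.-1)
      <= M * Yt + \sum_(j < n) \sum_(1 <= k < (m j).+1) 1 * rho j ^+ k.
  rewrite /Yt mulr_sumr -big_split /=; apply: ler_sum => j _.
  have J := @jordan R (m j) (fun k => rho j ^+ k) (m1 j) (fun k => exprn_ge0 k (rho0 j)).
  simpl in J.
  have h2 : (normc (a j) + cos (pi / (m j).+1%:R)) * Y j <= M * Y j.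
    by apply: ler_wpM2r; [apply: Y0 | apply: hMj].
  have h3 : rho j <= \sum_(1 <= k < (m j).+1) 1 * rho j ^+ k.
    rewrite big_ltn; last by rewrite ltnS m1.
    rewrite expr1 mul1r lerDl; apply: sumr_ge0 => k _; rewrite mul1r; exact: exprn_ge0 (rho0 j).
  rewrite mulrDl in h2; rewrite -/(Y j) in J; lra.
have csB := @cs2 R n m (fun j k => normc (b j k)) (fun j k => rho j ^+ k)
  (fun j k => nc_ge0 _) (fun j k => exprn_ge0 k (rho0 j)).
have csN := @cs2 R n m (fun j k => 1) (fun j k => rho j ^+ k)
  (fun j k => ler01) (fun j k => exprn_ge0 k (rho0 j)).
simpl in csB, csN.
have eN : \sum_(j < n) \sum_(1 <= k < (m j).+1) (1 : R) ^+ 2 = \sum_(j < n) (m j)%:R.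
  apply: eq_bigr => j _; rewrite expr1n sumr_const_nat subSS subn0 //.
rewrite eN -/Yt in csN; rewrite -/Yt in csB.
set sB := Num.sqrt (\sum_(j < n) \sum_(1 <= k < (m j).+1) normc (b j k) ^+ 2) in csB *.
set sN := Num.sqrt (\sum_(j < n) (m j)%:R) in csN *.
have sY : Num.sqrt Yt <= (1 + Yt) / 2.
  have := sqr_ge0 (Num.sqrt Yt - 1); rewrite sqrrB sqr_sqrtr // => h.
  lra.
have sB0 : 0 <= sB by apply: sqrtr_ge0.
have sN0 : 0 <= sN by apply: sqrtr_ge0.
have hB := ler_wpM2l sB0 sY.
have hN := ler_wpM2l sN0 sY.
rewrite -(ler_pM2r S0).
have := le_trans step5 (lerD (lexx _) step6).
move=> h.
nra.
Qed.
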